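(* Let $k\in\mathbb{Z}$ and $z\in\mathbb{C}\setminus\{0,-1/e\}$ (with $z$ in the domain of $W_k$). Then $$|W_k'(z)| \le \frac{1}{|z|}\max\left(3, \frac{1.5}{\sqrt{|ez+1|}}\right).$$
   Context: $W_k$ denotes the $k$-th branch of the Lambert $W$ function (inverse of $w\mapsto we^w$) in the standard convention of Corless, Gonnet, Hare, Jeffrey and Knuth (1996). On a branch cut, values are defined by continuity from the upper half plane and $W_k'$ denotes the derivative of the fixed branch $W_k$ (directional derivative along the cut there); $W'(z)=\frac{1}{z}\frac{W(z)}{1+W(z)}$. *)

(* Defs.v *)
From Stdlib Require Import Reals ZArith ClassicalEpsilon.
From Coquelicot Require Import Coquelicot.
Open Scope R_scope.

Definition Cexp (w : C) : C :=
  (exp (Re w) * cos (Im w), exp (Re w) * sin (Im w)).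

(* Principal argument, with values in (-PI, PI]: PI on the negative real
   axis, and the half-angle formula 2 atan (y / (|z| + x)) elsewhere. *)
Definition Arg (z : C) : R :=
  if Rlt_dec (Re z) 0 then
    (if Req_EM_T (Im z) 0 then PI else 2 * atan (Im z / (Cmod z + Re z)))
  else 2 * atan (Im z / (Cmod z + Re z)).

(* Argument of w = W_k(z) in the unwinding relation: on the real half-line
   w < -1 (the values of W_{-1} on [-1/e,0), obtained by continuity from the
   upper half plane in z, approached by w from below), Arg is taken as -PI. *)
Definition ArgW (w : C) : R :=
  if Rlt_dec (Re w) (-1) then
    (if Req_EM_T (Im w) 0 then - PI else Arg w)
  else Arg w.

(* w is the value of the k-th branch (Corless-Gonnet-Hare-Jeffrey-Knuth
   convention, counter-clockwise/upper continuity on cuts) at z: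
   w e^w = z and Im(w + Log w) = Im(Log z) + 2 pi k
   (the unwinding characterization of Jeffrey-Hare-Corless). *)
Definition is_LambertW (k : Z) (z w : C) : Prop :=
  Cmult w (Cexp w) = z /\ Im w + ArgW w = Arg z + 2 * PI * IZR k.

Definition LambertW (k : Z) (z : C) : C :=
  epsilon (inhabits (RtoC 0)) (fun w => is_LambertW k z w).

Definition LambertW' (k : Z) (z : C) : C :=
  Cmult (Cinv z) (Cdiv (LambertW k z) (Cplus (RtoC 1) (LambertW k z))).

(* Main.v *)
Require Import Defs.
From Stdlib Require Import Reals ZArith.
From Coquelicot Require Import Coquelicot.
From Stdlib Require Import Lra Lia Ranalysis5 ClassicalEpsilon.
Open Scope R_scope.

Lemma exp_half_le2 x : x <= 1/2 -> exp x <= 2.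
Proof.
  intros Hx. assert (H1 : exp x <= exp (1/2)) by (destruct (Req_dec x (1/2)) as [->|Hn]; [lra|left; apply exp_increasing; lra]).
  assert (H2 : exp (1/2) * exp (1/2) = exp 1) by (rewrite <- exp_plus; f_equal; lra).
  pose proof exp_le_3. pose proof (exp_pos (1/2)). nra.
Qed.

Lemma key (a b : R) : a*a + b*b <= 1/4 ->
  sqrt (((a-1)*exp a * cos b - b*exp a*sin b + 1)^2 + ((a-1)*exp a*sin b + b*exp a*cos b)^2)
  <= a*a + b*b.
Proof.
  intros Hab.
  set (P := (a-1)*exp a * cos b - b*exp a*sin b + 1).
  set (Q := (a-1)*exp a*sin b + b*exp a*cos b).
  set (M := sqrt (P^2 + Q^2)). set (K := a*a+b*b).
  assert (HM0 : 0 <= M) by apply sqrt_pos.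
  assert (HMM : M*M = P^2+Q^2) by (apply sqrt_sqrt; nra).
  set (f := fun t => P * ((t*a-1)*exp (t*a)*cos (t*b) - t*b*exp (t*a)*sin (t*b) + 1)
                   + Q * ((t*a-1)*exp (t*a)*sin (t*b) + t*b*exp (t*a)*cos (t*b)) - M*K*t^2).
  set (f' := fun t => t*exp (t*a)*(P*((a*a-b*b)*cos (t*b) - 2*a*b*sin (t*b))
                   + Q*((a*a-b*b)*sin (t*b) + 2*a*b*cos (t*b))) - 2*M*K*t).
  assert (Hd : forall c, 0 <= c <= 1 -> derivable_pt_lim f c (f' c)).
  { intros c _. apply is_derive_Reals. unfold f, f'. auto_derive; [trivial|ring]. }
  destruct (MVT_cor2 f f' 0 1 Rlt_0_1 Hd) as [c [Hc Hcr]].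
  assert (Hf1 : f 1 = P^2 + Q^2 - M*K).
  { unfold f. rewrite !Rmult_1_l. unfold P, Q. ring. }
  assert (Hf0 : f 0 = 0).
  { unfold f. rewrite !Rmult_0_l, exp_0, cos_0, sin_0. ring. }
  assert (Hneg : f' c <= 0).
  { unfold f'.
    set (cs := cos (c*b)). set (sn := sin (c*b)). set (E := exp (c*a)).
    assert (Hcs : cs*cs + sn*sn = 1) by (unfold cs, sn; pose proof (sin2_cos2 (c*b)); unfold Rsqr in *; lra).
    set (X := (a*a-b*b)*cs - 2*a*b*sn). set (Y := (a*a-b*b)*sn + 2*a*b*cs).
    assert (HXY : X*X + Y*Y = K*K).
    { unfold X, Y, K. transitivity (((a*a-b*b)^2 + (2*a*b)^2)*(cs*cs+sn*sn)); [ring|]. rewrite Hcs. ring. }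
    assert (HB2 : (P*X+Q*Y)^2 <= (M*K)^2).
    { assert (0 <= (P*Y-Q*X)^2) by apply pow2_ge_0.
      replace ((M*K)^2) with ((M*M)*(K*K)) by ring. rewrite HMM, <- HXY. nra. }
    assert (HK0 : 0 <= K) by (unfold K; nra).
    assert (HMK : 0 <= M*K) by (apply Rmult_le_pos; lra).
    assert (HB : P*X+Q*Y <= M*K).
    { destruct (Rle_or_lt (P*X+Q*Y) (M*K)) as [h|h]; [exact h|]. exfalso.
      assert ((M*K)*(M*K) < (P*X+Q*Y)*(P*X+Q*Y)) by (apply Rmult_le_0_lt_compat; lra). nra. }
    assert (HE0 : 0 < E) by apply exp_pos.
    assert (HE2 : E <= 2).
    { apply exp_half_le2. destruct Hc. assert (a <= 1/2) by nra. nra. }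
    destruct Hc.
    assert (c*E*(P*X+Q*Y) <= c*E*(M*K)) by (apply Rmult_le_compat_l; nra).
    assert (c*E*(M*K) <= c*2*(M*K)) by (apply Rmult_le_compat_r; nra).
    fold X Y. nra. }
  rewrite Hf1, Hf0 in Hc.
  assert (HMK2 : M*M <= M*K) by nra.
  destruct (Rle_or_lt M K) as [h|h]; [exact h|].
  assert (M*K < M*M) by (apply Rmult_lt_compat_l; [assert (0 <= K) by (unfold K; nra); lra|lra]). lra.
Qed.

Lemma bound_w (z w : C) : z <> RtoC 0 -> z <> RtoC (- exp (-1)) ->
  Cmult w (Cexp w) = z ->
  Cmod (Cmult (Cinv z) (Cdiv w (Cplus (RtoC 1) w))) <=
    / Cmod z * Rmax 3 ((3 / 2) / sqrt (Cmod (Cplus (Cmult (RtoC (exp 1)) z) (RtoC 1)))).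
Proof.
  intros Hz0 Hz1 Hw.
  assert (Hw1 : Cplus (RtoC 1) w <> RtoC 0).
  { intros H. apply Hz1. rewrite <- Hw. destruct w as [x y].
    unfold Cplus, RtoC in H; simpl in H. injection H as H1 H2.
    assert (x = -1) by lra. assert (y = 0) by lra. subst.
    unfold Cmult, Cexp, RtoC; simpl. rewrite cos_0, sin_0. f_equal; ring. }
  rewrite Cmod_mult, Cmod_inv by exact Hz0. rewrite Cmod_div by exact Hw1.
  apply Rmult_le_compat_l. { left. apply Rinv_0_lt_compat, Cmod_gt_0, Hz0. }
  set (m := Cmod (Cplus (RtoC 1) w)).
  assert (Hm : 0 < m) by (apply Cmod_gt_0, Hw1).
  assert (Htri : Cmod w <= m + 1).
  { replace w with (Cplus (Cplus (RtoC 1) w) (RtoC (-1))).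
    - eapply Rle_trans; [apply Cmod_triangle|]. unfold m. right. f_equal.
      unfold Cmod, RtoC; simpl. replace ((-1)*((-1)*1) + 0*(0*1)) with 1 by ring. apply sqrt_1.
    - destruct w; unfold Cplus, RtoC; simpl; f_equal; ring. }
  destruct (Rle_or_lt (1/2) m) as [Hm2|Hm2].
  - eapply Rle_trans; [|apply Rmax_l].
    apply Rle_trans with ((m+1)/m).
    + unfold Rdiv. apply Rmult_le_compat_r; [left; apply Rinv_0_lt_compat; lra| lra].
    + replace ((m+1)/m) with (1 + /m) by (field; lra).
      assert (/m <= 2). { replace 2 with (/ (1/2)) by field. apply Rinv_le_contravar; lra. }
      lra.
  - eapply Rle_trans; [|apply Rmax_r].
    destruct w as [x y].
    pose (a := x + 1). pose (b := y).
    set (F := Cmod (Cplus (Cmult (RtoC (exp 1)) z) (RtoC 1))).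
    assert (HF : F = sqrt (((a-1)*exp a * cos b - b*exp a*sin b + 1)^2 + ((a-1)*exp a*sin b + b*exp a*cos b)^2)).
    { unfold F. rewrite <- Hw. unfold Cmod, Cplus, Cmult, Cexp, RtoC; simpl. f_equal.
      unfold a, b. rewrite exp_plus. f_equal; f_equal; ring. }
    assert (Hmab : m = sqrt (a*a+b*b)).
    { unfold m, Cmod, Cplus, RtoC; simpl. f_equal. unfold a, b. ring. }
    assert (Hab : a*a+b*b <= 1/4).
    { assert (m*m = a*a+b*b) by (rewrite Hmab; apply sqrt_sqrt; nra). nra. }
    pose proof (key a b Hab) as Hk. rewrite <- HF in Hk.
    assert (HF0 : 0 < F).
    { destruct (Cmod_ge_0 (Cplus (Cmult (RtoC (exp 1)) z) (RtoC 1))) as [h|h]; [exact h|].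
      exfalso. apply Hz1. symmetry in h. apply Cmod_eq_0 in h.
      destruct z as [z1 z2]. unfold Cplus, Cmult, RtoC in h; simpl in h. injection h as h1 h2.
      assert (He : exp 1 > 0) by apply exp_pos.
      assert (E : exp (-1) = / exp 1) by (rewrite <- exp_Ropp; f_equal; ring).
      unfold RtoC. rewrite E. f_equal.
      - apply Rmult_eq_reg_l with (exp 1); [|lra]. field_simplify; lra.
      - nra. }
    assert (HsF : sqrt F <= m).
    { rewrite Hmab. apply sqrt_le_1_alt. lra. }
    assert (HsF0 : 0 < sqrt F) by (apply sqrt_lt_R0; lra).
    apply Rle_trans with ((3/2)/m).
    + unfold Rdiv. apply Rmult_le_compat_r; [left; apply Rinv_0_lt_compat; lra| ]. lra.
    + unfold Rdiv. apply Rmult_le_compat_l; [lra|]. apply Rinv_le_contravar; lra.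
Qed.

Lemma ln_le_sub1 x : 0 < x -> ln x <= x - 1.
Proof. intros Hx. pose proof (exp_ineq1_le (ln x)). rewrite exp_ln in H by lra. lra. Qed.

Lemma sin_lower x : 0 <= x <= 1 -> x / 2 <= sin x.
Proof. intros [H0 H1]. destruct (pre_sin_bound x 0 H0 ltac:(lra)) as [H _].
  replace (sin_approx x (2*0+1)) with (x - x^3/6) in H
    by (unfold sin_approx, sin_term; simpl; field). nra. Qed.

Lemma sin_upper x : 0 <= x -> sin x <= x.
Proof. intros H. destruct H as [H|<-]; [left; apply sin_lt_x; lra| rewrite sin_0; lra]. Qed.

Lemma cos_lower x : 1 - x^2/2 <= cos x.
Proof. pose proof (COS_bound x).
  destruct (Rle_or_lt x 2) as [h1|h1]; [destruct (Rle_or_lt (-2) x) as [h2|h2]|].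
  - destruct (pre_cos_bound x 0 h2 h1) as [H0 _].
    replace (cos_approx x (2*0+1)) with (1 - x^2/2) in H0
      by (unfold cos_approx, cos_term; simpl; field). exact H0.
  - nra.
  - nra.
Qed.

Lemma sinZ k : sin (2 * PI * IZR k) = 0.
Proof. apply sin_eq_0_1. exists (2*k)%Z. rewrite mult_IZR. ring. Qed.
Lemma cosZ k : cos (2 * PI * IZR k) = 1.
Proof. replace (2 * PI * IZR k) with (2 * (IZR k * PI)) by ring.
  rewrite cos_2a_sin. rewrite sin_eq_0_1 by (exists k; ring). ring. Qed.
Lemma cos_shiftZ x k : cos (x + 2 * PI * IZR k) = cos x.
Proof. rewrite cos_plus, sinZ, cosZ. ring. Qed.
Lemma sin_shiftZ x k : sin (x + 2 * PI * IZR k) = sin x.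
Proof. rewrite sin_plus, sinZ, cosZ. ring. Qed.

Lemma sin0_inv x : -PI < x < PI -> sin x = 0 -> x = 0.
Proof. intros [h1 h2] h. destruct (sin_eq_0_0 x h) as [k ->].
  pose proof PI_RGT_0.
  assert (-1 < IZR k) by (apply Rmult_lt_reg_r with PI; lra).
  assert (IZR k < 1) by (apply Rmult_lt_reg_r with PI; lra).
  apply lt_IZR in H0. apply lt_IZR in H1. assert (k = 0%Z) by lia. subst. simpl. ring. Qed.

Lemma Arg_range z : -PI < Arg z <= PI.
Proof. unfold Arg. pose proof (atan_bound (Im z / (Cmod z + Re z))). pose proof PI_RGT_0.
  destruct Rlt_dec; [destruct Req_EM_T|]; lra. Qed.

Lemma half_angle r x y : r*r = x*x+y*y -> 0 < r -> 0 < r + x ->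
  cos (2 * atan (y/(r+x))) = x/r /\ sin (2 * atan (y/(r+x))) = y/r.
Proof.
  intros Hr Hr0 Hd. set (t := y/(r+x)).
  rewrite cos_2a, sin_2a, cos_atan, sin_atan.
  set (s := sqrt (1 + t²)).
  assert (Hs : s * s = 1 + t^2) by (unfold s, Rsqr; rewrite sqrt_sqrt; nra).
  assert (Hs0 : 0 < s) by (unfold s; apply sqrt_lt_R0; unfold Rsqr; nra).
  assert (E1 : ((r+x)^2 - y^2) * r = x * ((r+x)^2 + y^2)).
  { replace (y^2) with (r*r - x*x) by nra. ring. }
  assert (E2 : 2 * y * (r+x) * r = y * ((r+x)^2 + y^2)).
  { replace (y^2) with (r*r - x*x) by nra. ring. }
  assert (Ht : t * (r+x) = y) by (unfold t; field; lra).
  assert (Hy : y = t*(r+x)) by lra.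
  rewrite Hy in E1, E2.
  assert (HD : (r+x)^2 <> 0) by (apply pow_nonzero; lra).
  assert (F1 : (1 - t^2) * r = x * (1 + t^2)).
  { apply Rmult_eq_reg_l with ((r+x)^2); [|exact HD].
    transitivity (((r + x) ^ 2 - (t * (r + x)) ^ 2) * r); [ring|]. rewrite E1. ring. }
  assert (F2 : 2 * t * r = t * (r+x) * (1 + t^2)).
  { apply Rmult_eq_reg_l with ((r+x)^2); [|exact HD].
    transitivity (2 * (t * (r + x)) * (r + x) * r); [ring|]. rewrite E2. ring. }
  assert (Ht2 : 0 < 1 + t^2) by (pose proof (pow2_ge_0 t); lra).
  split.
  - replace (1/s*(1/s) - t/s*(t/s)) with ((1 - t^2)/(s*s)) by (field; lra). rewrite Hs.
    transitivity (((1-t^2)*r)/((1+t^2)*r)); [field; split; lra|]. rewrite F1. field; split; lra.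
  - replace (2 * (t/s) * (1/s)) with ((2*t)/(s*s)) by (field; lra). rewrite Hs.
    transitivity ((2*t*r)/((1+t^2)*r)); [field; split; lra|]. rewrite F2. rewrite Hy. field; split; lra.
Qed.

Lemma polar_z z : z <> RtoC 0 -> z = (Cmod z * cos (Arg z), Cmod z * sin (Arg z)).
Proof.
  intros Hz. destruct z as [x y]. unfold Arg, Re, Im; simpl.
  assert (Hr : 0 < Cmod (x,y)) by (apply Cmod_gt_0; exact Hz).
  set (r := Cmod (x,y)) in *.
  assert (Hrr : r * r = x*x + y*y) by (unfold r, Cmod; simpl; rewrite sqrt_sqrt; nra).
  assert (Hgen : x < 0 -> y = 0 -> False -> True) by auto.
  destruct (Rlt_dec x 0) as [hx|hx]; [destruct (Req_EM_T y 0) as [hy|hy]|].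
  - subst y. rewrite cos_PI, sin_PI. assert (r = -x) by nra. f_equal; lra.
  - assert (Hd : r + x > 0).
    { assert (r > -x). { apply Rnot_le_lt. intros hh. assert (y*y > 0) by (apply Rsqr_pos_lt in hy; unfold Rsqr in hy; lra).
      assert (r*r <= (-x)*(-x)) by (apply Rmult_le_compat; lra). nra. } lra. }
    destruct (half_angle r x y Hrr Hr Hd) as [h1 h2]. rewrite h1, h2. f_equal; field; lra.
  - assert (Hd : r + x > 0) by lra.
    destruct (half_angle r x y Hrr Hr Hd) as [h1 h2]. rewrite h1, h2. f_equal; field; lra.
Qed.

Lemma Arg_polar rho phi : 0 < rho -> -PI < phi < PI -> Arg (rho * cos phi, rho * sin phi) = phi.
Proof.
  intros Hr Hp. unfold Arg, Re, Im; cbn [fst snd].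
  assert (Hc : Cmod (rho * cos phi, rho * sin phi) = rho).
  { unfold Cmod; cbn [fst snd]. replace ((rho * cos phi) ^ 2 + (rho * sin phi) ^ 2) with (rho*rho).
    apply sqrt_square; lra. pose proof (sin2_cos2 phi). unfold Rsqr in H. nra. }
  rewrite Hc.
  assert (Hgen : 2 * atan (rho * sin phi / (rho + rho * cos phi)) = phi).
  { set (h := phi/2). assert (Hh : phi = 2*h) by (unfold h; field).
    assert (Hch : 0 < cos h) by (apply cos_gt_0; unfold h; lra).
    rewrite Hh, sin_2a, cos_2a_cos.
    replace (rho + rho * (2 * cos h * cos h - 1)) with (2*rho*cos h*cos h) by ring.
    replace (rho * (2 * sin h * cos h) / (2*rho*cos h*cos h)) with (tan h)
      by (unfold tan; field; repeat split; lra).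
    rewrite atan_tan; [reflexivity| unfold h; lra]. }
  destruct (Rlt_dec (rho * cos phi) 0); [destruct (Req_EM_T (rho * sin phi) 0) as [e|e]|]; try exact Hgen.
  exfalso. assert (sin phi = 0) by (apply Rmult_eq_reg_l with rho; lra).
  apply sin0_inv in H; [|lra]. subst. rewrite cos_0 in r. lra.
Qed.


Lemma ln_mono x y : 0 < x -> x <= y -> ln x <= ln y.
Proof. intros h [h'|<-]; [left; apply ln_increasing; lra|lra]. Qed.

Lemma cont_of_derive (f : R -> R) x : ex_derive f x -> continuity_pt f x.
Proof. intros H. apply continuity_pt_filterlim. apply (ex_derive_continuous (K:=R_AbsRing) (V:=R_NormedModule)). exact H. Qed.

Lemma ivt_up (f : R -> R) a b L : a < b -> (forall c, a <= c <= b -> continuity_pt f c) ->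
  f a < L -> L < f b -> exists c, a <= c <= b /\ f c = L.
Proof.
  intros hab hc ha hb.
  destruct (IVT_interv (fun x => f x - L) a b) as [c [hc1 hc2]]; try lra.
  - intros c hc'. apply continuity_pt_minus; [apply hc; exact hc'|apply continuity_pt_const; intros ? ?; reflexivity].
  - exists c. split; [exact hc1|lra].
Qed.

Lemma ivt_down (f : R -> R) a b L : a < b -> (forall c, a <= c <= b -> continuity_pt f c) ->
  L < f a -> f b < L -> exists c, a <= c <= b /\ f c = L.
Proof.
  intros hab hc ha hb.
  destruct (ivt_up (fun x => - f x) a b (-L)) as [c [h1 h2]]; try lra.
  - intros c hc'. apply continuity_pt_opp. apply hc; exact hc'.
  - exists c. split; [exact h1|lra].
Qed.

Lemma real_sol_pos L : exists r, 0 < r /\ ln r + r = L.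
Proof.
  set (a := Rmin 1 (exp (L-2))). set (b := Rmax 2 (L+1)).
  assert (ha0 : 0 < a) by (unfold a; apply Rmin_glb_lt; [lra|apply exp_pos]).
  assert (ha1 : a <= 1) by apply Rmin_l.
  assert (hb2 : 2 <= b) by apply Rmax_l.
  destruct (ivt_up (fun r => ln r + r) a b L) as [c [hc1 hc2]]; try lra.
  - intros c hc. apply cont_of_derive. auto_derive. lra.
  - assert (ln a <= L - 2). { rewrite <- (ln_exp (L-2)). apply ln_mono; [lra|apply Rmin_r]. } lra.
  - assert (0 <= ln b). { rewrite <- ln_1. apply ln_mono; lra. } pose proof (Rmax_r 2 (L+1)). fold b in H0. lra.
  - exists c. split; [lra|exact hc2].
Qed.

Lemma real_sol_small L : L < -1 -> exists r, 0 < r <= 1 /\ ln r - r = L.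
Proof.
  intros HL. set (a := Rmin (1/2) (exp L)).
  assert (ha0 : 0 < a) by (unfold a; apply Rmin_glb_lt; [lra|apply exp_pos]).
  assert (ha1 : a <= 1/2) by apply Rmin_l.
  destruct (ivt_up (fun r => ln r - r) a 1 L) as [c [hc1 hc2]]; try lra.
  - intros c hc. apply cont_of_derive. auto_derive. lra.
  - assert (ln a <= L). { rewrite <- (ln_exp L). apply ln_mono; [lra|apply Rmin_r]. } lra.
  - rewrite ln_1. lra.
  - exists c. split; [lra|exact hc2].
Qed.

Lemma real_sol_big L : L < -1 -> exists r, 1 < r /\ ln r - r = L.
Proof.
  intros HL. set (b := Rmax 2 (2*(1-L))).
  assert (hb : 2 <= b) by apply Rmax_l.
  assert (hb' : 2*(1-L) <= b) by apply Rmax_r.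
  destruct (ivt_down (fun r => ln r - r) 1 b L) as [c [hc1 hc2]]; try lra.
  - intros c hc. apply cont_of_derive. auto_derive. lra.
  - rewrite ln_1. lra.
  - assert (ln b <= b/2).
    { replace b with (2 * (b/2)) at 1 by field. rewrite ln_mult by lra.
      pose proof (ln_le_sub1 2 ltac:(lra)). pose proof (ln_le_sub1 (b/2) ltac:(lra)). lra. }
    lra.
  - exists c. split; [|exact hc2]. destruct hc1 as [[h|h] _]; [exact h|]. subst c. rewrite ln_1 in hc2. lra.
Qed.

Definition Gf th p := ln ((th - p) / sin p) + (th - p) / sin p * cos p.

Lemma cos_PI_minus x : cos (PI - x) = - cos x.
Proof. rewrite cos_minus, cos_PI, sin_PI. ring. Qed.

Lemma core th L : 0 < th -> (th = PI -> -1 < L) ->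
  exists rho phi, 0 < rho /\ 0 < phi < PI /\ rho * sin phi = th - phi /\ ln rho + rho * cos phi = L.
Proof.
  intros Hth HL. pose proof PI_RGT_0 as Hpi0. pose proof PI_4 as Hpi4. pose proof (PI2_3_2) as Hpi32.
  assert (Hpi3 : 3 < PI) by lra.
  set (A := Rabs L + 1).
  assert (HA : 1 <= A) by (unfold A; pose proof (Rabs_pos L); lra).
  assert (HLA : L < A) by (unfold A; pose proof (Rle_abs L); lra).
  assert (HLA' : -A < L) by (unfold A; pose proof (Rle_abs (-L)); rewrite Rabs_Ropp in H; lra).
  set (p0 := Rmin 1 (th / (4 * A))).
  assert (Hp0 : 0 < p0) by (unfold p0; apply Rmin_glb_lt; [lra|apply Rdiv_lt_0_compat; lra]).
  assert (Hp01 : p0 <= 1) by apply Rmin_l.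
  assert (Hp0A : p0 * (4*A) <= th).
  { pose proof (Rmin_r 1 (th/(4*A))). fold p0 in H.
    apply Rmult_le_compat_r with (r := 4*A) in H; [|lra]. replace (th / (4*A) * (4*A)) with th in H by (field; lra). exact H. }
  assert (Hp0th : p0 <= th/4) by nra.
  assert (HG0 : L < Gf th p0).
  { unfold Gf.
    assert (hs : 0 < sin p0) by (apply sin_gt_0; lra).
    assert (hs1 : sin p0 <= p0) by (apply sin_upper; lra).
    assert (hc : 1/2 <= cos p0) by (pose proof (cos_lower p0); nra).
    set (r0 := (th - p0) / sin p0).
    assert (hr0 : (th - p0)/p0 <= r0).
    { unfold r0, Rdiv. apply Rmult_le_compat_l; [lra|]. apply Rinv_le_contravar; lra. }
    assert (hr1 : 3 * A <= (th - p0)/p0).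
    { apply Rmult_le_reg_r with p0; [lra|]. replace ((th-p0)/p0*p0) with (th-p0) by (field; lra). nra. }
    assert (0 <= ln r0). { rewrite <- ln_1. apply ln_mono; lra. }
    nra. }
  assert (Hp1 : exists p1, p0 < p1 /\ p1 < PI /\ p1 < th /\ Gf th p1 < L).
  { destruct (Rtotal_order th PI) as [Hlt|[Heq|Hgt]].
    -
      set (s := sin th). assert (Hs : 0 < s) by (apply sin_gt_0; lra).
      assert (Hsth : s <= th) by (apply sin_upper; lra).
      assert (Hs1 : s <= 1) by (pose proof (SIN_bound th); unfold s; lra).
      set (r' := Rmin 1 (exp (L-2))).
      assert (hr'0 : 0 < r') by (unfold r'; apply Rmin_glb_lt; [lra|apply exp_pos]).
      assert (hr'1 : r' <= 1) by apply Rmin_l.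
      assert (hr'L : ln r' <= L - 2). { rewrite <- (ln_exp (L-2)). apply ln_mono; [lra|apply Rmin_r]. }
      set (d := r' * s / 4).
      assert (hd0 : 0 < d) by (unfold d; nra).
      assert (hds : d <= s/4) by (unfold d; nra).
      exists (th - d). split; [lra|]. split; [lra|]. split; [lra|].
      assert (hsd : s/2 <= sin (th - d)).
      { rewrite sin_minus. fold s.
        pose proof (cos_lower d). pose proof (COS_bound d). pose proof (COS_bound th).
        assert (0 <= sin d) by (apply sin_ge_0; lra). pose proof (sin_upper d ltac:(lra)).
        assert (cos th * sin d <= sin d).
        { destruct (Rle_or_lt 0 (cos th)); nra. }
        nra. }
      unfold Gf. replace (th - (th - d)) with d by ring.
      set (r1 := d / sin (th - d)).
      assert (hr10 : 0 < r1) by (unfold r1; apply Rdiv_lt_0_compat; lra).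
      assert (hr1 : r1 <= r').
      { unfold r1. apply Rmult_le_reg_r with (sin (th - d)); [lra|].
        replace (d / sin (th - d) * sin (th - d)) with d by (field; lra).
        assert (r' * (s/2) <= r' * sin (th - d)) by (apply Rmult_le_compat_l; lra). assert (0 <= r' * s) by nra. assert (Hdd : d = r' * s / 4) by reflexivity. lra. }
      pose proof (ln_mono _ _ hr10 hr1). pose proof (COS_bound (th - d)).
      assert (r1 * cos (th - d) <= r1) by nra. lra.
    -
      specialize (HL Heq). subst th.
      set (y := Rmin (1/2) ((L+1)/2)).
      assert (hy0 : 0 < y) by (unfold y; apply Rmin_glb_lt; lra).
      assert (hy1 : y <= 1/2) by apply Rmin_l.
      assert (hyL : y <= (L+1)/2) by apply Rmin_r.
      exists (PI - y). split; [lra|]. split; [lra|]. split; [lra|].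
      unfold Gf. replace (PI - (PI - y)) with y by ring. rewrite sin_PI_x, cos_PI_minus.
      assert (hs : y/2 <= sin y) by (apply sin_lower; lra).
      pose proof (cos_lower y). pose proof (COS_bound y).
      set (r1 := y / sin y).
      assert (hr10 : 0 < r1) by (unfold r1; apply Rdiv_lt_0_compat; lra).
      assert (hr1 : r1 <= 2).
      { unfold r1. apply Rmult_le_reg_r with (sin y); [lra|].
        replace (y / sin y * sin y) with y by (field; lra). lra. }
      pose proof (ln_le_sub1 r1 hr10).
      assert (r1 * (1 - cos y) <= 2 * (y^2/2)) by (apply Rmult_le_compat; lra).
      nra.
    -
      set (c := th - PI). assert (hc : 0 < c) by (unfold c; lra).
      set (B := Rabs L + 2).
      assert (HB : 2 <= B) by (unfold B; pose proof (Rabs_pos L); lra).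
      assert (HLB : -B + 1 < L) by (unfold B; pose proof (Rle_abs (-L)); rewrite Rabs_Ropp in H; lra).
      set (y := Rmin 1 (c / (4*B))).
      assert (hy0 : 0 < y) by (unfold y; apply Rmin_glb_lt; [lra|apply Rdiv_lt_0_compat; lra]).
      assert (hy1 : y <= 1) by apply Rmin_l.
      assert (hyB : y * (4*B) <= c).
      { pose proof (Rmin_r 1 (c/(4*B))). fold y in H.
        apply Rmult_le_compat_r with (r := 4*B) in H; [|lra]. replace (c / (4*B) * (4*B)) with c in H by (field; lra). exact H. }
      exists (PI - y). split; [lra|]. split; [lra|]. split; [lra|].
      unfold Gf. replace (th - (PI - y)) with (c + y) by (unfold c; ring). rewrite sin_PI_x, cos_PI_minus.
      assert (hs0 : 0 < sin y) by (apply sin_gt_0; lra).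
      assert (hs1 : sin y <= y) by (apply sin_upper; lra).
      assert (hcy : 1/2 <= cos y) by (pose proof (cos_lower y); nra).
      set (r1 := (c + y) / sin y).
      assert (hr1 : 4 * B <= r1).
      { unfold r1. apply Rmult_le_reg_r with (sin y); [lra|].
        replace ((c + y) / sin y * sin y) with (c + y) by (field; lra). nra. }
      assert (hln : ln r1 <= r1/4 + 1).
      { replace r1 with (4 * (r1/4)) at 1 by field. rewrite ln_mult by lra.
        replace 4 with (2*2) at 1 by ring. rewrite ln_mult by lra.
        pose proof (ln_le_sub1 2 ltac:(lra)). pose proof (ln_le_sub1 (r1/4) ltac:(lra)). lra. }
      assert (r1 * cos y >= r1 / 2) by nra.
      lra. }
  destruct Hp1 as [p1 [h01 [h1pi [h1th HG1]]]].
  destruct (ivt_down (Gf th) p0 p1 L h01) as [p [hp hGp]]; try assumption.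
  - intros c hc. assert (0 < sin c) by (apply sin_gt_0; lra).
    apply cont_of_derive. unfold Gf. auto_derive. split; [lra|split; [apply Rmult_lt_0_compat; [lra|apply Rinv_0_lt_compat; lra]|split; [lra|exact I]]].
  - assert (hsp : 0 < sin p) by (apply sin_gt_0; lra).
    exists ((th - p)/sin p), p. split; [apply Rdiv_lt_0_compat; lra|]. split; [lra|].
    split; [field; lra|]. exact hGp.
Qed.

Lemma build k z rho phi : z <> RtoC 0 -> 0 < rho -> -PI < phi < PI ->
  rho * sin phi = Arg z + 2 * PI * IZR k - phi ->
  ln rho + rho * cos phi = ln (Cmod z) ->
  is_LambertW k z (rho * cos phi, rho * sin phi).
Proof.
  intros Hz Hr Hp H1 H2.
  assert (Hm : 0 < Cmod z) by (apply Cmod_gt_0; exact Hz).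
  assert (HE : Cmod z = rho * exp (rho * cos phi)).
  { rewrite <- (exp_ln (Cmod z)) by lra. rewrite <- H2, exp_plus, exp_ln by lra. reflexivity. }
  assert (Hth : Arg z + 2 * PI * IZR k = phi + rho * sin phi) by lra.
  split.
  - transitivity ((Cmod z * cos (Arg z), Cmod z * sin (Arg z))); [|symmetry; apply polar_z; exact Hz].
    rewrite <- (cos_shiftZ (Arg z) k), <- (sin_shiftZ (Arg z) k), Hth, HE.
    unfold Cmult, Cexp, Re, Im. cbn [fst snd]. rewrite cos_plus, sin_plus. f_equal; ring.
  - unfold Im at 1. cbn [snd].
    assert (HA : ArgW (rho * cos phi, rho * sin phi) = phi).
    { unfold ArgW, Re, Im. cbn [fst snd].
      destruct (Rlt_dec (rho * cos phi) (-1)) as [h|h]; [destruct (Req_EM_T (rho * sin phi) 0) as [e|e]|];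
        try (apply Arg_polar; assumption).
      exfalso. assert (sin phi = 0) by (apply Rmult_eq_reg_l with rho; lra).
      apply sin0_inv in H; [|lra]. subst. rewrite cos_0 in h. lra. }
    rewrite HA. lra.
Qed.

Lemma Arg_pi z k : -PI < Arg z <= PI ->
  (Arg z + 2 * PI * IZR k = PI \/ Arg z + 2 * PI * IZR k = -PI) -> Arg z = PI.
Proof.
  intros [h1 h2] [e|e]; pose proof PI_RGT_0.
  - assert (IZR k < 1) by (apply Rmult_lt_reg_l with (2*PI); lra).
    assert (0 <= IZR k) by (apply Rmult_le_reg_l with (2*PI); lra).
    apply lt_IZR in H0. apply le_IZR in H1. assert (k = 0%Z) by lia. subst. simpl in e. lra.
  - assert (IZR k < 0) by (apply Rmult_lt_reg_l with (2*PI); lra).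
    assert (-1 <= IZR k) by (apply Rmult_le_reg_l with (2*PI); lra).
    apply lt_IZR in H0. apply le_IZR in H1. assert (k = (-1)%Z) by lia. subst. simpl in e. lra.
Qed.

Lemma build_neg k z rho : z <> RtoC 0 -> Arg z = PI -> 0 < rho ->
  ln rho - rho = ln (Cmod z) ->
  ArgW (- rho, 0) = Arg z + 2 * PI * IZR k ->
  is_LambertW k z (- rho, 0).
Proof.
  intros Hz HA Hr H2 H3.
  assert (Hm : 0 < Cmod z) by (apply Cmod_gt_0; exact Hz).
  assert (HE : Cmod z = rho * exp (- rho)).
  { rewrite <- (exp_ln (Cmod z)) by lra. rewrite <- H2. unfold Rminus. rewrite exp_plus, exp_ln by lra. reflexivity. }
  split.
  - transitivity ((Cmod z * cos (Arg z), Cmod z * sin (Arg z))); [|symmetry; apply polar_z; exact Hz].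
    rewrite HA, cos_PI, sin_PI, HE. unfold Cmult, Cexp, Re, Im. cbn [fst snd]. rewrite cos_0, sin_0. f_equal; ring.
  - unfold Im at 1. cbn [snd]. rewrite H3. ring.
Qed.

Lemma exists_W k z : z <> RtoC 0 -> z <> RtoC (- exp (-1)) -> exists w, is_LambertW k z w.
Proof.
  intros Hz Hz1. pose proof PI_RGT_0 as Hpi.
  set (th := Arg z + 2 * PI * IZR k). set (L := ln (Cmod z)).
  assert (Hm : 0 < Cmod z) by (apply Cmod_gt_0; exact Hz).
  assert (HAL : Arg z = PI -> L <> -1).
  { intros HA HL. apply Hz1. rewrite (polar_z z Hz). rewrite HA, cos_PI, sin_PI.
    assert (Cmod z = exp (-1)) by (rewrite <- HL; unfold L; rewrite exp_ln; lra).
    rewrite H. unfold RtoC. f_equal; ring. }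
  pose proof (Arg_range z) as Hrng.
  destruct (Rtotal_order th 0) as [neg|[zero|pos]].
  - assert (Hcore : exists rho phi, 0 < rho /\ 0 < phi < PI /\ rho * sin phi = -th - phi /\ ln rho + rho * cos phi = L
                \/ (th = -PI /\ L < -1)).
    { destruct (Req_dec th (-PI)) as [e|e].
      - assert (HA : Arg z = PI) by (apply (Arg_pi z k Hrng); right; exact e).
        specialize (HAL HA). destruct (Rlt_or_le L (-1)) as [hl|hl].
        + exists 0, 0. right. split; assumption.
        + destruct (core (-th) L) as [rho [phi Hc]]; [lra|intros; lra|]. exists rho, phi. left; exact Hc.
      - destruct (core (-th) L) as [rho [phi Hc]]; [lra|intros; lra|]. exists rho, phi. left; exact Hc. }
    destruct Hcore as [rho [phi [[h1 [h2 [h3 h4]]]|[e hl]]]].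
    + exists (rho * cos (-phi), rho * sin (-phi)). apply build; try assumption; try lra.
      * rewrite sin_neg. fold th. lra.
      * rewrite cos_neg. exact h4.
    + destruct (real_sol_big L hl) as [rho' [hr1 hr2]].
      exists (- rho', 0). apply build_neg; try assumption; try lra.
      * apply (Arg_pi z k Hrng). right. exact e.
      * fold th. rewrite e. unfold ArgW, Re, Im. cbn [fst snd].
        destruct (Rlt_dec (- rho') (-1)); [|lra]. destruct (Req_EM_T 0 0); [reflexivity|congruence].
  - destruct (real_sol_pos L) as [rho [h1 h2]].
    exists (rho * cos 0, rho * sin 0). apply build; try assumption; try lra.
    + rewrite sin_0. fold th. lra.
    + rewrite cos_0. rewrite Rmult_1_r. exact h2.
  - assert (Hcore : exists rho phi, 0 < rho /\ 0 < phi < PI /\ rho * sin phi = th - phi /\ ln rho + rho * cos phi = L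
                \/ (th = PI /\ L < -1)).
    { destruct (Req_dec th PI) as [e|e].
      - assert (HA : Arg z = PI) by (apply (Arg_pi z k Hrng); left; exact e).
        specialize (HAL HA). destruct (Rlt_or_le L (-1)) as [hl|hl].
        + exists 0, 0. right. split; assumption.
        + destruct (core th L) as [rho [phi Hc]]; [lra|intros; lra|]. exists rho, phi. left; exact Hc.
      - destruct (core th L) as [rho [phi Hc]]; [lra|intros; lra|]. exists rho, phi. left; exact Hc. }
    destruct Hcore as [rho [phi [[h1 [h2 [h3 h4]]]|[e hl]]]].
    + exists (rho * cos phi, rho * sin phi). apply build; try assumption; try lra.
    + destruct (real_sol_small L hl) as [rho' [hr1 hr2]].
      exists (- rho', 0). apply build_neg; try assumption; try lra.
      * apply (Arg_pi z k Hrng). left. exact e.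
      * fold th. rewrite e. unfold ArgW, Arg, Re, Im. cbn [fst snd].
        destruct (Rlt_dec (- rho') (-1)); [lra|].
        destruct (Rlt_dec (- rho') 0); [|lra]. destruct (Req_EM_T 0 0); [reflexivity|congruence].
Qed.


Theorem theorem6 (k : Z) (z : C) :
  z <> RtoC 0 -> z <> RtoC (- exp (-1)) ->
  Cmod (LambertW' k z) <=
    / Cmod z * Rmax 3 ((3 / 2) / sqrt (Cmod (Cplus (Cmult (RtoC (exp 1)) z) (RtoC 1)))).
Proof.
  intros Hz Hz1. unfold LambertW'.
  pose proof (epsilon_spec (inhabits (RtoC 0)) (fun w => is_LambertW k z w) (exists_W k z Hz Hz1)) as [Hw _].
  apply bound_w; assumption.
Qed.
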